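(* Let $\Gamma$ be a finite connected adequate graph. Then there is a unique (up to isomorphism) irreducible adequate graph $\Gamma_0$ for which there exists a chromatic covering $q:\Gamma\to\Gamma_0$. This covering map $q$ is unique, and an automorphism $\phi:\Gamma\to\Gamma$ preserves the coloring of $\Gamma$ if and only if it is a deck transformation of $q$.
   Context: Fix $r\geq1$ and a type $((p_i,q_i))_{i=1}^r\in(\mathbb{N}^2)^r$. A graph $\Gamma=(V,E)$ consists of sets $V,E$ and maps $s,t:E\to V$ (loops and multiple edges allowed), identified with its topological realization; a morphism of graphs is a pair of maps on vertices and edges compatible with $s,t$, and a covering is a surjective morphism that is a local homeomorphism. An adequate graph is a graph with colorings $c:V\to\{1,\dots,r\}$, $c_o,c_i:E\to\mathbb{N}$ such that if $c(v)=a$ then there are exactly $p_a$ edges with source $v$, with $c_o$-values exactly $\{1,\dots,p_a\}$, and exactly $q_a$ edges with target $v$, with $c_i$-values exactly $\{1,\dots,q_a\}$. A morphism is chromatic if it preserves $c$, $c_o$ and $c_i$. A finite connected adequate graph $\Gamma_0$ is irreducible if every chromatic morphism from $\Gamma_0$ to an adequate graph is an isomorphism. *)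

(* Defs.v *)
From mathcomp Require Import all_boot.
From Stdlib Require Import Relation_Operators List.

Set Implicit Arguments.
Unset Strict Implicit.
Unset Printing Implicit Defensive.

(* A type ((p_a,q_a))_{a} of adequate graphs, with vertex colours 'I_r
   (colour a : 'I_r stands for the paper's colour a+1 in {1,...,r}). *)

Definition adequate_axiom (r : nat) (p q : 'I_r -> nat) (V E : Type)
    (s t : E -> V) (c : V -> 'I_r) (co ci : E -> nat) : Prop :=
  forall v : V,
    ((forall e, s e = v -> 1 <= co e <= p (c v)) /\
     (forall e1 e2, s e1 = v -> s e2 = v -> co e1 = co e2 -> e1 = e2) /\
     (forall k, 1 <= k <= p (c v) -> exists e, s e = v /\ co e = k)) /\
    ((forall e, t e = v -> 1 <= ci e <= q (c v)) /\
     (forall e1 e2, t e1 = v -> t e2 = v -> ci e1 = ci e2 -> e1 = e2) /\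
     (forall k, 1 <= k <= q (c v) -> exists e, t e = v /\ ci e = k)).

Record adequate_graph (r : nat) (p q : 'I_r -> nat) := AdequateGraph {
  gV : Type;
  gE : Type;
  gs : gE -> gV;
  gt : gE -> gV;
  gc : gV -> 'I_r;
  gco : gE -> nat;
  gci : gE -> nat;
  gadequate : adequate_axiom p q gs gt gc gco gci
}.

Section Graphs.
Variables (r : nat) (p q : 'I_r -> nat).

Definition finite_type (T : Type) : Prop := exists l : list T, forall x, In x l.

Definition finite_graph (G : adequate_graph p q) : Prop :=
  finite_type (gV G) /\ finite_type (gE G).

Definition adjacent (G : adequate_graph p q) (u v : gV G) : Prop :=
  exists e, gs e = u /\ gt e = v.

Definition connected_graph (G : adequate_graph p q) : Prop :=
  inhabited (gV G) /\
  forall u v : gV G, clos_refl_sym_trans (gV G) (@adjacent G) u v.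

Record gmorphism (G H : adequate_graph p q) := GMorphism {
  mV : gV G -> gV H;
  mE : gE G -> gE H;
  m_src : forall e, gs (mE e) = mV (gs e);
  m_tgt : forall e, gt (mE e) = mV (gt e)
}.

Definition chromatic (G H : adequate_graph p q) (f : gmorphism G H) : Prop :=
  (forall v, gc (mV f v) = gc v) /\
  (forall e, gco (mE f e) = gco e) /\
  (forall e, gci (mE f e) = gci e).

Definition gisomorphism (G H : adequate_graph p q) (f : gmorphism G H) : Prop :=
  bijective (mV f) /\ bijective (mE f).

(* Covering: surjective morphism which is a local homeomorphism, i.e. for
   every vertex v it maps the star of v (half-edges at v) bijectively onto
   the star of its image. *)
Definition covering (G H : adequate_graph p q) (f : gmorphism G H) : Prop :=
  (forall w, exists v, mV f v = w) /\
  (forall e', exists e, mE f e = e') /\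
  (forall v (e' : gE H), gs e' = mV f v ->
       exists e, (gs e = v /\ mE f e = e') /\
                 forall e2, gs e2 = v /\ mE f e2 = e' -> e2 = e) /\
  (forall v (e' : gE H), gt e' = mV f v ->
       exists e, (gt e = v /\ mE f e = e') /\
                 forall e2, gt e2 = v /\ mE f e2 = e' -> e2 = e).

Definition irreducible (G0 : adequate_graph p q) : Prop :=
  finite_graph G0 /\ connected_graph G0 /\
  forall (H : adequate_graph p q) (f : gmorphism G0 H),
    connected_graph H -> chromatic f -> gisomorphism f.

Definition morph_eq (G H : adequate_graph p q) (f g : gmorphism G H) : Prop :=
  (forall v, mV f v = mV g v) /\ (forall e, mE f e = mE g e).

Definition deck_transformation (G H : adequate_graph p q)
    (qq : gmorphism G H) (phi : gmorphism G G) : Prop :=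
  gisomorphism phi /\
  (forall v, mV qq (mV phi v) = mV qq v) /\
  (forall e, mE qq (mE phi e) = mE qq e).

End Graphs.

(* Main.v *)
From Stdlib Require Import Relation_Operators ProofIrrelevance FunctionalExtensionality PropExtensionality ClassicalEpsilon.
Require Import Defs.
From mathcomp Require Import all_boot.

Set Implicit Arguments.
Unset Strict Implicit.
Unset Printing Implicit Defensive.

Lemma sval_eq (A : Type) (P : A -> Prop) (x y : {a | P a}) : sval x = sval y -> x = y.
Proof. case: x y => [a ha] [b hb] /= eab; subst b; f_equal; apply: proof_irrelevance. Qed.

Lemma inj_surj_bij (A B : Type) (f : A -> B) :
  injective f -> (forall b, exists a, f a = b) -> bijective f.
Proof.
move=> inj sur.
pose g b := proj1_sig (constructive_indefinite_description _ (sur b)).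
have gK b : f (g b) = b by rewrite /g; case: constructive_indefinite_description.
exists g => [a|b]; last exact: gK.
by apply: inj; rewrite gK.
Qed.

Inductive step := Out of nat & nat | In of nat & nat.

Section Main.
Variables (r : nat) (p q : 'I_r -> nat).
Notation AG := (adequate_graph p q).

Section Basic.
Variable G : AG.

Lemma ad_out_rng (e : gE G) : 1 <= gco e <= p (gc (gs e)).
Proof. by case: (@gadequate _ _ _ G (gs e)) => [[h _] _]; apply: h. Qed.
Lemma ad_out_inj (e1 e2 : gE G) : gs e1 = gs e2 -> gco e1 = gco e2 -> e1 = e2.
Proof. by move=> h; case: (@gadequate _ _ _ G (gs e2)) => [[_ [h' _]] _]; apply: h'. Qed.
Lemma ad_out_ex (v : gV G) k : 1 <= k <= p (gc v) -> exists e, gs e = v /\ gco e = k.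
Proof. by case: (@gadequate _ _ _ G v) => [[_ [_ h]] _]; apply: h. Qed.
Lemma ad_in_rng (e : gE G) : 1 <= gci e <= q (gc (gt e)).
Proof. by case: (@gadequate _ _ _ G (gt e)) => [_ [h _]]; apply: h. Qed.
Lemma ad_in_inj (e1 e2 : gE G) : gt e1 = gt e2 -> gci e1 = gci e2 -> e1 = e2.
Proof. by move=> h; case: (@gadequate _ _ _ G (gt e2)) => [_ [_ [h' _]]]; apply: h'. Qed.
Lemma ad_in_ex (v : gV G) k : 1 <= k <= q (gc v) -> exists e, gt e = v /\ gci e = k.
Proof. by case: (@gadequate _ _ _ G v) => [_ [_ [_ h]]]; apply: h. Qed.

Fixpoint walk (v : gV G) (w : seq step) (u : gV G) {struct w} : Prop :=
  match w with
  | [::] => u = v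
  | Out k j :: w' => exists e, [/\ gs e = v, gco e = k, gci e = j & walk (gt e) w' u]
  | In j k :: w' => exists e, [/\ gt e = v, gci e = j, gco e = k & walk (gs e) w' u]
  end.

Definition view (v : gV G) : seq step -> 'I_r -> Prop :=
  fun w a => exists u, walk v w u /\ gc u = a.

Lemma view_out (e : gE G) :
  view (gt e) = fun w a => view (gs e) (Out (gco e) (gci e) :: w) a.
Proof.
apply: functional_extensionality => w; apply: functional_extensionality => a.
apply: propositional_extensionality; split.
  by case=> u [hw hc]; exists u; split=> //; exists e.
case=> u [[e' [h1 h2 h3 hw]] hc].
have ee : e' = e by apply: ad_out_inj.
by subst e'; exists u.
Qed.

Lemma view_in (e : gE G) :
  view (gs e) = fun w a => view (gt e) (In (gci e) (gco e) :: w) a.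
Proof.
apply: functional_extensionality => w; apply: functional_extensionality => a.
apply: propositional_extensionality; split.
  by case=> u [hw hc]; exists u; split=> //; exists e.
case=> u [[e' [h1 h2 h3 hw]] hc].
have ee : e' = e by apply: ad_in_inj.
by subst e'; exists u.
Qed.

Lemma view_out_det (e1 e2 : gE G) : view (gs e1) = view (gs e2) -> gco e1 = gco e2 ->
  gci e1 = gci e2 /\ gc (gt e1) = gc (gt e2).
Proof.
move=> hv hco.
have : view (gs e1) [:: Out (gco e1) (gci e1)] (gc (gt e1)).
  by exists (gt e1); split=> //; exists e1.
rewrite hv => -[u [[e [h1 h2 h3 hw]] hc]].
have ee : e = e2 by apply: ad_out_inj => //; rewrite h2.
subst e; rewrite /= in hw; subst u; by split.
Qed.

Lemma view_in_det (e1 e2 : gE G) : view (gt e1) = view (gt e2) -> gci e1 = gci e2 ->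
  gco e1 = gco e2 /\ gc (gs e1) = gc (gs e2).
Proof.
move=> hv hci.
have : view (gt e1) [:: In (gci e1) (gco e1)] (gc (gs e1)).
  by exists (gs e1); split=> //; exists e1.
rewrite hv => -[u [[e [h1 h2 h3 hw]] hc]].
have ee : e = e2 by apply: ad_in_inj => //; rewrite h2.
subst e; rewrite /= in hw; subst u; by split.
Qed.

End Basic.

Section Morph.
Variables (G H : AG) (f : gmorphism G H).
Hypothesis hf : chromatic f.

Lemma lift_out (v : gV G) (e' : gE H) : gs e' = mV f v -> exists e, gs e = v /\ mE f e = e'.
Proof.
case: hf => hc [hco hci] he'.
have := ad_out_rng e'; rewrite he' hc => /(ad_out_ex (G:=G)) [e [h1 h2]].
exists e; split=> //; apply: ad_out_inj; first by rewrite m_src h1.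
by rewrite hco.
Qed.

Lemma lift_in (v : gV G) (e' : gE H) : gt e' = mV f v -> exists e, gt e = v /\ mE f e = e'.
Proof.
case: hf => hc [hco hci] he'.
have := ad_in_rng e'; rewrite he' hc => /(ad_in_ex (G:=G)) [e [h1 h2]].
exists e; split=> //; apply: ad_in_inj; first by rewrite m_tgt h1.
by rewrite hci.
Qed.

Lemma chrom_covering : inhabited (gV G) -> connected_graph H -> covering f.
Proof.
case=> v0 [_ hconn].
have sv : forall w, exists v, mV f v = w.
  move=> w.
  suff : forall x y, clos_refl_sym_trans _ (@adjacent _ _ _ H) x y ->
      ((exists v, mV f v = x) <-> (exists v, mV f v = y)).
    by move=> /(_ _ _ (hconn (mV f v0) w)) [h _]; apply: h; exists v0.
  move=> x y; elim=> {x y}.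
  - move=> x y [e' [hs ht]]; split.
      case=> v hv; have [e [_ he]] := lift_out (etrans hs (esym hv)).
      by exists (gt e); rewrite -m_tgt he.
    case=> v hv; have [e [_ he]] := lift_in (etrans ht (esym hv)).
    by exists (gs e); rewrite -m_src he.
  - by [].
  - by move=> x y _ h; split; apply h.
  - by move=> x y z _ h1 _ h2; split=> h; [apply/h2/h1 | apply/h1/h2].
split=> //; split.
  move=> e'; have [v hv] := sv (gs e').
  by have [e [_ <-]] := lift_out (esym hv); exists e.
case: hf => hc [hco hci].
split.
  move=> v e' he'; have [e [h1 h2]] := lift_out he'.
  exists e; split=> // e2 [h3 h4]; apply: ad_out_inj; first by rewrite h1 h3.
  by rewrite -hco h4 -h2 hco.
move=> v e' he'; have [e [h1 h2]] := lift_in he'.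
exists e; split=> // e2 [h3 h4]; apply: ad_in_inj; first by rewrite h1 h3.
by rewrite -hci h4 -h2 hci.
Qed.

Lemma walk_map v w u : walk v w u -> walk (mV f v) w (mV f u).
Proof.
case: hf => hc [hco hci].
elim: w v => [|[k j|j k] w IH] v /=; first by move->.
  case=> e [h1 h2 h3 hw]; exists (mE f e); split.
  - by rewrite m_src h1.
  - by rewrite hco.
  - by rewrite hci.
  by rewrite m_tgt; apply: IH.
case=> e [h1 h2 h3 hw]; exists (mE f e); split.
- by rewrite m_tgt h1.
- by rewrite hci.
- by rewrite hco.
by rewrite m_src; apply: IH.
Qed.

Lemma walk_lift v w u' : walk (mV f v) w u' -> exists u, walk v w u /\ mV f u = u'.
Proof.
case: (hf) => hc [hco hci].
elim: w v => [|[k j|j k] w IH] v /=; first by move->; exists v.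
  case=> e' [h1 h2 h3 hw]; have [e [he1 he2]] := lift_out h1.
  move: hw; rewrite -he2 m_tgt => /IH [u [hu1 hu2]].
  exists u; split=> //; exists e; split=> //.
    by rewrite -hco he2.
  by rewrite -hci he2.
case=> e' [h1 h2 h3 hw]; have [e [he1 he2]] := lift_in h1.
move: hw; rewrite -he2 m_src => /IH [u [hu1 hu2]].
exists u; split=> //; exists e; split=> //.
  by rewrite -hci he2.
by rewrite -hco he2.
Qed.

Lemma view_map v : view (mV f v) = view v.
Proof.
case: (hf) => hc _.
apply: functional_extensionality => w; apply: functional_extensionality => a.
apply: propositional_extensionality; split.
  by case=> u' [/walk_lift [u [hu <-]] hc']; exists u; rewrite -hc.
by case=> u [hu hcu]; exists (mV f u); rewrite hc; split=> //; apply: walk_map.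
Qed.

End Morph.

Lemma crst_map (G H : AG) (f : gmorphism G H) x y :
  clos_refl_sym_trans _ (@adjacent _ _ _ G) x y ->
  clos_refl_sym_trans _ (@adjacent _ _ _ H) (mV f x) (mV f y).
Proof.
elim=> {x y}.
- move=> x y [e [hs ht]]; apply: rst_step; exists (mE f e).
  by rewrite m_src m_tgt hs ht.
- by move=> x; apply: rst_refl.
- by move=> x y _ h; apply: rst_sym.
- by move=> x y z _ h1 _ h2; apply: rst_trans h2.
Qed.


Definition VW := seq step -> 'I_r -> Prop.

Section Quot.
Variable G : AG.

Definition QV := {x : VW * 'I_r | exists v : gV G, x = (view v, gc v)}.
Definition etup (e : gE G) : VW * 'I_r * 'I_r * nat * nat :=
  (view (gs e), gc (gs e), gc (gt e), gco e, gci e).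
Definition QE := {y : VW * 'I_r * 'I_r * nat * nat | exists e, y = etup e}.

Definition Qs (y : QE) : QV.
refine (exist _ ((sval y).1.1.1.1, (sval y).1.1.1.2) _).
by case: y => yy [e he] /=; exists (gs e); rewrite he.
Defined.

Definition Qt (y : QE) : QV.
refine (exist _ ((fun w a => (sval y).1.1.1.1 (Out (sval y).1.2 (sval y).2 :: w) a),
                 (sval y).1.1.2) _).
by case: y => yy [e he] /=; exists (gt e); rewrite he /= (view_out e).
Defined.

Definition Qc (x : QV) : 'I_r := (sval x).2.
Definition Qco (y : QE) : nat := (sval y).1.2.
Definition Qci (y : QE) : nat := (sval y).2.

Lemma QsE y e : sval y = etup e -> sval (Qs y) = (view (gs e), gc (gs e)).
Proof. by move=> h; rewrite /= h. Qed.
Lemma QtE y e : sval y = etup e -> sval (Qt y) = (view (gt e), gc (gt e)).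
Proof. by move=> h; rewrite /= h (view_out e). Qed.

Lemma QE_ex (y : QE) : exists e, sval y = etup e.
Proof. by case: y. Qed.
Lemma QV_ex (x : QV) : exists v : gV G, sval x = (view v, gc v).
Proof. by case: x. Qed.

Lemma Qout_rng y : 1 <= Qco y <= p (Qc (Qs y)).
Proof.
have [e he] := QE_ex y; rewrite /Qc (QsE he) /Qco he /=; exact: ad_out_rng.
Qed.

Lemma Qin_rng y : 1 <= Qci y <= q (Qc (Qt y)).
Proof.
have [e he] := QE_ex y; rewrite /Qc (QtE he) /Qci he /=; exact: ad_in_rng.
Qed.

Lemma Qout_inj y1 y2 : Qs y1 = Qs y2 -> Qco y1 = Qco y2 -> y1 = y2.
Proof.
have [e1 he1] := QE_ex y1; have [e2 he2] := QE_ex y2.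
move=> /(f_equal sval); rewrite (QsE he1) (QsE he2) /Qco he1 he2 /= => -[hv hc] hco.
have [hci hct] := view_out_det hv hco.
by apply: sval_eq; rewrite he1 he2 /etup hv hc hct hco hci.
Qed.

Lemma Qin_inj y1 y2 : Qt y1 = Qt y2 -> Qci y1 = Qci y2 -> y1 = y2.
Proof.
have [e1 he1] := QE_ex y1; have [e2 he2] := QE_ex y2.
move=> /(f_equal sval); rewrite (QtE he1) (QtE he2) /Qci he1 he2 /= => -[hv hc] hci.
have [hco hcs] := view_in_det hv hci.
have hvs : view (gs e1) = view (gs e2) by rewrite !view_in hv hci hco.
by apply: sval_eq; rewrite he1 he2 /etup hvs hcs hc hco hci.
Qed.

Definition mkE (e : gE G) : QE := exist _ (etup e) (ex_intro _ e erefl).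
Definition mkV (v : gV G) : QV := exist _ (view v, gc v) (ex_intro _ v erefl).

Lemma Qout_ex X k : 1 <= k <= p (Qc X) -> exists y, Qs y = X /\ Qco y = k.
Proof.
have [v hv] := QV_ex X; rewrite /Qc hv /= => /(ad_out_ex (G:=G)) [e [h1 h2]].
exists (mkE e); split=> //; apply: sval_eq; by rewrite (QsE (y:=mkE e) erefl) hv h1.
Qed.

Lemma Qin_ex X k : 1 <= k <= q (Qc X) -> exists y, Qt y = X /\ Qci y = k.
Proof.
have [v hv] := QV_ex X; rewrite /Qc hv /= => /(ad_in_ex (G:=G)) [e [h1 h2]].
exists (mkE e); split=> //; apply: sval_eq; by rewrite (QtE (y:=mkE e) erefl) hv h1.
Qed.

Lemma Q_adequate : adequate_axiom p q Qs Qt Qc Qco Qci.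
Proof.
move=> X; split; split.
- by move=> y <-; apply: Qout_rng.
- split; last exact: Qout_ex.
  by move=> y1 y2 h1 h2; apply: Qout_inj; rewrite h1 h2.
- by move=> y <-; apply: Qin_rng.
- split; last exact: Qin_ex.
  by move=> y1 y2 h1 h2; apply: Qin_inj; rewrite h1 h2.
Qed.

Definition Quot : AG := AdequateGraph Q_adequate.

Definition qmap : gmorphism G Quot.
refine (@GMorphism _ _ _ G Quot mkV mkE _ _).
- by move=> e; apply: sval_eq; rewrite (QsE (y:=mkE e) erefl).
- by move=> e; apply: sval_eq; rewrite (QtE (y:=mkE e) erefl).
Defined.

Lemma qmap_chrom : chromatic qmap.
Proof. by split. Qed.

Lemma qmap_surj (x : gV Quot) : exists v, mV qmap v = x.
Proof. have [v hv] := QV_ex x; exists v; apply: sval_eq; by rewrite hv. Qed.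

Lemma view_qmap v : view (mV qmap v) = view v.
Proof. exact: view_map qmap_chrom v. Qed.

End Quot.

Lemma quot_connected (G : AG) : connected_graph G -> connected_graph (Quot G).
Proof.
case=> [[v0] hc]; split; first by constructor; exact: mV (qmap G) v0.
move=> x y; have [v <-] := qmap_surj x; have [w <-] := qmap_surj y.
exact: crst_map.
Qed.

Lemma quot_finite (G : AG) : finite_graph G -> finite_graph (Quot G).
Proof.
case=> [[lv hv] [le he]]; split.
  exists (List.map (mV (qmap G)) lv) => x.
  have [v <-] := qmap_surj x; exact: List.in_map.
exists (List.map (mE (qmap G)) le) => y.
have [e he'] := QE_ex y.
have -> : y = mE (qmap G) e by apply: sval_eq.
exact: List.in_map.
Qed.

Lemma quot_irred (G : AG) : finite_graph G -> connected_graph G -> irreducible (Quot G).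
Proof.
move=> hfin hcon; split; first exact: quot_finite.
split; first exact: quot_connected.
move=> H f hH hf.
have [inh _] := quot_connected hcon.
have [sV [sE _]] := chrom_covering hf inh hH.
case: (hf) => hc [hco hci].
have injV : injective (mV f).
  move=> x1 x2 h.
  have [v1 hv1] := qmap_surj x1; have [v2 hv2] := qmap_surj x2.
  have e1 := view_map hf x1; have e2 := view_map hf x2.
  apply: sval_eq; move: e1 e2 (hc x1) (hc x2); rewrite h -hv1 -hv2 !view_qmap /=.
  move=> -> ->; rewrite /Qc /= => hc1 hc2.
  by rewrite -hc1 hc2.
split; apply: inj_surj_bij => //.
move=> y1 y2 h; apply: Qout_inj.
  by apply: injV; rewrite -!m_src h.
by move: (hco y1) (hco y2); rewrite h /= => <- ->.
Qed.

Lemma irred_view_inj (G : AG) : irreducible G ->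
  forall u u' : gV G, view u = view u' -> gc u = gc u' -> u = u'.
Proof.
case=> _ [hcon hirr] u u' hv hc.
have [[g gK _] _] := (hirr _ (qmap G) (quot_connected hcon) (qmap_chrom G)).
rewrite -(gK u) -(gK u'); congr g; apply: sval_eq; by rewrite /= hv hc.
Qed.

Lemma quot_univ (G G1 : AG) (q1 : gmorphism G G1) :
  chromatic q1 -> irreducible G1 -> exists h : gmorphism (Quot G) G1, chromatic h.
Proof.
move=> hq hirr; case: (hq) => hc [hco hci].
have key : forall v w, view v = view w -> gc v = gc w -> mV q1 v = mV q1 w.
  by move=> v w hv hcc; apply: (irred_view_inj hirr); rewrite ?(view_map hq) ?hc.
have [pv pvP] : exists pv : QV G -> gV G, forall x, sval x = (view (pv x), gc (pv x)).
  exists (fun x => proj1_sig (constructive_indefinite_description _ (QV_ex x))) => x.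
  by case: constructive_indefinite_description.
have [pe peP] : exists pe : QE G -> gE G, forall y, sval y = etup (pe y).
  exists (fun y => proj1_sig (constructive_indefinite_description _ (QE_ex y))) => y.
  by case: constructive_indefinite_description.
unshelve refine (ex_intro _ (@GMorphism _ _ _ (Quot G) G1 (fun x => mV q1 (pv x))
                    (fun y => mE q1 (pe y)) _ _) _).
- move=> y; rewrite m_src; apply: key.
    by have := pvP (Qs y); rewrite (QsE (peP y)) => -[-> _].
  by have := pvP (Qs y); rewrite (QsE (peP y)) => -[_ ->].
- move=> y; rewrite m_tgt; apply: key.
    by have := pvP (Qt y); rewrite (QtE (peP y)) => -[-> _].
  by have := pvP (Qt y); rewrite (QtE (peP y)) => -[_ ->].
split; [|split] => /=.
- by move=> x; rewrite hc /Qc (pvP x).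
- by move=> y; rewrite hco /Qco (peP y).
- by move=> y; rewrite hci /Qci (peP y).
Qed.

End Main.

Theorem proposition3p13 (r : nat) (p q : 'I_r -> nat) (r_pos : 0 < r)
    (G : adequate_graph p q) :
  finite_graph G -> connected_graph G ->
  exists (G0 : adequate_graph p q) (qq : gmorphism G G0),
    irreducible G0 /\ chromatic qq /\ covering qq /\
    (* uniqueness of G0 up to (chromatic) isomorphism *)
    (forall (G1 : adequate_graph p q) (q1 : gmorphism G G1),
        irreducible G1 -> chromatic q1 -> covering q1 ->
        exists iso : gmorphism G0 G1, chromatic iso /\ gisomorphism iso) /\
    (* uniqueness of the covering map *)
    (forall q' : gmorphism G G0, chromatic q' -> covering q' -> morph_eq q' qq) /\
    (* colour-preserving automorphisms = deck transformations *)
    (forall phi : gmorphism G G, gisomorphism phi ->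
        (chromatic phi <-> deck_transformation qq phi)).
Proof.
move=> hfin hcon.
have hirr := quot_irred hfin hcon.
have qc := qmap_chrom G.
have [inh _] := hcon.
exists (Quot G), (qmap G); split=> //; split=> //.
split; first exact: chrom_covering qc inh (quot_connected hcon).
split.
  move=> G1 q1 hirr1 hq1 _; have [h hh] := quot_univ hq1 hirr1.
  exists h; split=> //; case: hirr => _ [_ hi]; apply: hi => //; by case: hirr1 => _ [].
have hvq : forall v w, view v = view w -> gc v = gc w -> mV (qmap G) v = mV (qmap G) w.
  by move=> v w hv hc; apply: sval_eq; rewrite /= hv hc.
have quniq : forall f : gmorphism G (Quot G), chromatic f -> morph_eq f (qmap G).
  move=> f hf; case: (hf) => hc [hco hci].
  have hV : forall v, mV f v = mV (qmap G) v.
    by move=> v; apply: (irred_view_inj hirr); rewrite ?(view_map hf) ?view_qmap // hc.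
  split=> // e; have h1 := m_src f e; have h2 := m_src (qmap G) e; rewrite hV in h1.
  apply: Qout_inj; first exact: (etrans h1 (esym h2)).
  exact: (etrans (hco e) (esym (proj1 (proj2 qc) e))).
split; first by move=> q' hq' _; apply: quniq.
move=> phi hphi; split.
  move=> hp; case: (hp) => hc [hco hci].
  have hV : forall v, mV (qmap G) (mV phi v) = mV (qmap G) v.
    by move=> v; apply: hvq; rewrite ?(view_map hp) ?hc.
  split=> //; split=> // e.
  have h1 := m_src (qmap G) (mE phi e); have h2 := m_src (qmap G) e.
  rewrite (m_src phi) hV in h1.
  apply: Qout_inj; first exact: (etrans h1 (esym h2)).
  exact: (etrans (proj1 (proj2 qc) _) (etrans (hco e) (esym (proj1 (proj2 qc) e)))).
case=> _ [hV hE]; split; [|split].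
- by move=> v; move: (hV v); rewrite /mkV => /(f_equal (fun x => (sval x).2)).
- by move=> e; move: (hE e) => /(f_equal (fun x => (sval x).1.2)).
- by move=> e; move: (hE e) => /(f_equal (fun x => (sval x).2)).
Qed.
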